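(* Let $\varphi(x_1,\dots,x_n)$ be a formula in the language of $\mathbf{A}^{\natural}$ that has the tree property. Then for every element $b^{k}\in A^{\natural}$ there is $m\le 8$ such that $\varphi(b^{k},\dots,b^{k})=b^{m}$. Moreover, if $i\in\{1,3,4\}$, then $\varphi(b^{i},\dots,b^{i})\in\{b^1,b^3,b^4\}$.
   Context: $\mathbf{A}$ is a fixed non-trivial algebra whose set $\mathcal{F}$ of basic operations contains no constant symbols, and $h$ is a unary function on $A$. Construction of $\mathbf{A}^{\natural}$: universe is the disjoint union of eight copies $A_1,\dots,A_8$ of $A$ ($a^i$ is the copy of $a$ in $A_i$); operations: each $n$-ary $f\in\mathcal{F}$ with $f(a_1^{m_1},\dots,a_n^{m_n})=(f^{\mathbf{A}}(a_1,\dots,a_n))^5$; a ternary $\heartsuit$ with $\heartsuit(a^m,b^n,c^k)=a^1$ if $a^m=c^k$, $h(a)^5=b^n$, $m\in\{1,3,4\}$; $=a^2$ if $a^m=c^k$, $h(a)^5=b^n$, $m\in\{2,5,6,7,8\}$; $=a^4$ if $m,k\in\{1,3,4\}$ and ($a^m\ne c^k$ or $h(a)^5\ne b^n$); $=a^7$ if $\{m,k\}\cap\{2,5,6,7,8\}\ne\emptyset$ and ($a^m\ne c^k$ or $h(a)^5\ne b^n$); a unary $\Box$ with $\Box(a^m)=a^m$ for $m\in\{1,2\}$, $a^{m-1}$ for even $m\ge3$, $a^{m+1}$ for odd $m\ge3$. Subformula tree of a formula $\varphi$ of $\mathbf{A}^{\natural}$ (defined recursively): for a variable $x$, the one-node tree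 labelled $x$; for $\varphi=g(\psi_1,\dots,\psi_n)$ with $g$ a basic symbol, take the disjoint union of the subformula trees of $\psi_1,\dots,\psi_n$, relabel the root of the tree of $\psi_i$ by $\langle\psi_i,i\rangle$, and add a common new root labelled $\varphi$. A formula $\varphi$ has the tree property if every node of its subformula tree whose label is a formula with principal symbol in $\mathcal{F}$ (possibly paired with a natural number) is either equal to or has as an ancestor a node labelled $\langle\beta,2\rangle$ whose immediate predecessor (parent) is labelled $\heartsuit(\alpha,\beta,\gamma)$ or $\langle\heartsuit(\alpha,\beta,\gamma),n\rangle$ for some $n$. *)

(* Defs.v *)
From mathcomp Require Import all_boot.
From Stdlib Require Import ClassicalEpsilon.

Set Implicit Arguments.
Unset Strict Implicit.
Unset Printing Implicit Defensive.

Inductive copy := C1 | C2 | C3 | C4 | C5 | C6 | C7 | C8.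

Definition copy_num (m : copy) : nat :=
  match m with C1 => 1 | C2 => 2 | C3 => 3 | C4 => 4
             | C5 => 5 | C6 => 6 | C7 => 7 | C8 => 8 end.

Definition in134 (m : copy) : bool :=
  match m with C1 | C3 | C4 => true | _ => false end.

Section Natural.
Variables (A : Type) (Fsym : Type) (ar : Fsym -> nat).
Variable (fA : forall f : Fsym, ('I_(ar f) -> A) -> A).
Variable (h : A -> A).

(* Universe of A^natural : pairs (a, m) standing for a^m. *)
Definition U := (A * copy)%type.

Definition dec (P : Prop) : bool :=
  if excluded_middle_informative P then true else false.

Definition opF (f : Fsym) (args : 'I_(ar f) -> U) : U :=
  (fA (fun i => (args i).1), C5).

Definition heart (x y z : U) : U :=
  let: (a, m) := x in
  let: (_, k) := z in
  if dec (x = z /\ (h a, C5) = y) then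
    (if in134 m then (a, C1) else (a, C2))
  else if in134 m && in134 k then (a, C4) else (a, C7).

Definition box (x : U) : U :=
  let: (a, m) := x in
  match m with
  | C1 => (a, C1) | C2 => (a, C2)
  | C3 => (a, C4) | C4 => (a, C3)
  | C5 => (a, C6) | C6 => (a, C5)
  | C7 => (a, C8) | C8 => (a, C7)
  end.
End Natural.

Inductive term (Fsym : Type) (ar : Fsym -> nat) : Type :=
| Tvar : nat -> term ar
| TF : forall f : Fsym, ('I_(ar f) -> term ar) -> term ar
| Theart : term ar -> term ar -> term ar -> term ar
| Tbox : term ar -> term ar.

Section Terms.
Variables (A : Type) (Fsym : Type) (ar : Fsym -> nat).
Variable (fA : forall f : Fsym, ('I_(ar f) -> A) -> A).
Variable (h : A -> A).

Fixpoint eval (v : nat -> U A) (t : term ar) : U A :=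
  match t with
  | Tvar x => v x
  | TF f args => opF fA (fun i => eval v (args i))
  | Theart t1 t2 t3 => heart h (eval v t1) (eval v t2) (eval v t3)
  | Tbox t1 => box (eval v t1)
  end.

(* The i-th immediate subformula (1-based), i.e. the child of the node
   in the subformula tree labelled <psi_i, i>. *)
Definition child (t : term ar) (i : nat) : option (term ar) :=
  match t with
  | Tvar _ => None
  | TF f args => if i == 0 then None else omap args (insub i.-1)
  | Theart t1 t2 t3 =>
      match i with 1 => Some t1 | 2 => Some t2 | 3 => Some t3 | _ => None end
  | Tbox t1 => match i with 1 => Some t1 | _ => None end
  end.

(* Nodes of the subformula tree are addressed by paths (lists of child
   indices) from the root; subterm_at t p is the formula labelling node p. *)
Fixpoint subterm_at (t : term ar) (p : seq nat) : option (term ar) :=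
  match p with
  | [::] => Some t
  | i :: p' => match child t i with
               | Some c => subterm_at c p'
               | None => None
               end
  end.

Definition is_node (t : term ar) (p : seq nat) := subterm_at t p <> None.

Definition is_F_formula (t : term ar) : bool :=
  if t is TF _ _ then true else false.

Definition is_heart (t : term ar) : bool :=
  if t is Theart _ _ _ then true else false.

(* Tree property: every node labelled by a formula with principal symbol in F
   is equal to, or has as an ancestor, a node with index 2 whose parent is
   labelled by a heart-formula.  The node rcons q 2 is such a node (with
   parent q), and it is equal to or an ancestor of node p iff it is a prefix
   of p. *)
Definition tree_property (phi : term ar) : Prop :=
  forall (p : seq nat) (psi : term ar),
    subterm_at phi p = Some psi -> is_F_formula psi ->
    exists q : seq nat, exists alpha beta gamma : term ar,
      prefix (rcons q 2) p /\
      subterm_at phi q = Some (Theart alpha beta gamma).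
End Terms.

(* Main.v *)
Require Import Defs.
From mathcomp Require Import all_boot.

Section Aux.
Variables (Fsym : Type) (ar : Fsym -> nat).

Fixpoint good (t : term ar) : Prop :=
  match t with
  | Tvar _ => True
  | TF _ _ => False
  | Theart t1 _ t3 => good t1 /\ good t3
  | Tbox t1 => good t1
  end.


Lemma tp_child (t c : term ar) (i : nat) :
  i != 2 -> child t i = Some c -> tree_property t -> tree_property c.
Proof.
move=> Hi Hc Ht p psi Hp HF.
have Hp' : subterm_at t (i :: p) = Some psi by rewrite /= Hc.
have [q [al [be [ga [Hpre Hq]]]]] := Ht _ _ Hp' HF.
case: q Hpre Hq => [|j q] /= Hpre Hq.
  by move: Hpre; rewrite /= eq_sym (negbTE Hi).
move: Hpre; rewrite /prefix -/prefix; case: eqP => // Eji Hpre; subst j.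
  idtac.
move: Hq; rewrite Hc => Hq.
by exists q, al, be, ga.
Qed.

Lemma tp_good (t : term ar) : tree_property t -> good t.
Proof.
elim: t => [n|f args IH|t1 IH1 t2 IH2 t3 IH3|t1 IH1] /= Ht //.
- have [q [al [be [ga [Hpre _]]]]] := Ht [::] (TF args) erefl erefl.
  by case: q Hpre.
- split; [apply: IH1; exact: (@tp_child (Theart t1 t2 t3) t1 1 erefl erefl Ht) | apply: IH3; exact: (@tp_child (Theart t1 t2 t3) t3 3 erefl erefl Ht)].
- by apply: IH1; exact: (@tp_child (Tbox t1) t1 1 erefl erefl Ht).
Qed.

Lemma good_eval (A : Type) (fA : forall f : Fsym, ('I_(ar f) -> A) -> A)
  (h : A -> A) (b : A) (k : copy) (t : term ar) :
  good t -> exists m, eval fA h (fun _ => (b, k)) t = (b, m) /\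
                      (in134 k -> in134 m).
Proof.
elim: t => [n|f args IH|t1 IH1 t2 IH2 t3 IH3|t1 IH1] //=.
- by move=> _; exists k.
- move=> [G1 G3].
  have [m1 [E1 H1]] := IH1 G1.
  have [m3 [E3 H3]] := IH3 G3.
  rewrite E1 E3 /heart.
  case: (dec _) => /=.
    by case Hm: (in134 m1); [exists C1 | exists C2; split=> // /H1; rewrite Hm].
  case Hm: (in134 m1 && in134 m3).
    by exists C4.
  exists C7; split=> // Hk; move: Hm; by rewrite (H1 Hk) (H3 Hk).
- move=> G; have [m [E H]] := IH1 G; rewrite E /box.
  by case: m E H => E H; eexists; (split; [reflexivity| move=> /H]).
Qed.
End Aux.

Theorem lemma6p3
  (A : Type) (Fsym : Type) (ar : Fsym -> nat)
  (fA : forall f : Fsym, ('I_(ar f) -> A) -> A) (h : A -> A)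
  (A_nontrivial : exists a1 a2 : A, a1 <> a2)
  (no_constants : forall f : Fsym, 0 < ar f)
  (phi : term ar) (Hphi : tree_property phi) :
  forall (b : A) (k : copy),
    (exists m : copy, copy_num m <= 8 /\
       eval fA h (fun _ => (b, k)) phi = (b, m)) /\
    (in134 k -> exists m : copy, in134 m /\
       eval fA h (fun _ => (b, k)) phi = (b, m)).
Proof.
move=> b k.
have [m [E H]] := @good_eval _ _ _ fA h b k phi (@tp_good _ _ phi Hphi).
split; first by exists m; split => //; case: m {E H}.
by move=> Hk; exists m; split => //; apply: H.
Qed.
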